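(* Suppose the execution of MaxHedge with parameters $s>1$ and $\rho$ is valid, and an online algorithm ALG with responses $P_j$ is cautious in every round up to and including round $i$ (with $i$ in the domain of MaxHedge). Let $\mathrm{ALG}'$ be the algorithm that responds with $Z_1,\dots,Z_{i-1}$ in rounds $1,\dots,i-1$ and with $P_i$ in round $i$. Then $\mathrm{ALG}(\mathbf X_i;\alpha)\ge\mathrm{ALG}'(\mathbf X_i;\alpha)$.
   Context: Fix $\alpha\in(0,\pi/4]$. A drone at $(t_x,t_y)$, $t_y\ge0$, covers $[t_x-t_y\tan\alpha,t_x+t_y\tan\alpha]$ on the $x$-axis; $\mathrm{FC}(X_0,\dots,X_i)$ denotes the set of positions covering $X_0,\dots,X_i$. Fix $s>1$ and the requests $X_0=(0,0)$, $X_i=(2(-s)^{i-1},0)$ for $i\ge1$; $\mathbf X_i=(X_0,\dots,X_i)$. Let $T_i$ be the apex of $\mathrm{FC}(X_0,\dots,X_i)$: $T_0=X_0$, $T_1=(1,\cot\alpha)$, $T_i=((-s)^{i-2}(1-s),\ s^{i-2}(1+s)\cot\alpha)$ for $i\ge2$. Let $o_i=|X_0T_i|$, the optimal offline cost for $\mathbf X_i$ ($o_0=0$). MaxHedge with parameter $\rho>0$: $Z_0=X_0$; for $i\ge1$, $Z_i=T_i+z_i(T_{i+1}-T_i)$ with $z_i\ge0$ is the intersection of the halfline from $T_i$ through $T_{i+1}$ with the circle centred at $Z_{i-1}$ of radius $\rho(o_i-o_{i-1})$; if no such point exists, MaxHedge fails in round $i$. Its domain is $\{0,\dots,i-1\}$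 if it fails in round $i$, and all rounds otherwise. The execution is valid if for every round $i\ge1$ in the domain, $Z_i$ lies on the same side of the $y$-axis as $T_i$. An online algorithm ALG responds with $P_0=X_0$ and $P_i\in\mathrm{FC}(X_0,\dots,X_i)$ chosen knowing only $X_0,\dots,X_i$; its cost on $\mathbf X_i$ is $\mathrm{ALG}(\mathbf X_i;\alpha)=\sum_{j=0}^{i-1}|P_jP_{j+1}|$. ALG is cautious in round $j$ if $P_j$ lies in the closed disk centred at $Z_{j-1}$ of radius $|Z_{j-1}Z_j|$. *)

(* Defs.v *)
From Stdlib Require Import Reals Lra.
Open Scope R_scope.

Definition pt := (R * R)%type.

Definition dist (P Q : pt) : R :=
  sqrt ((fst Q - fst P) ^ 2 + (snd Q - snd P) ^ 2).

Definition cot (a : R) : R := / tan a.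

Definition Xreq (s : R) (i : nat) : pt :=
  match i with
  | O => (0, 0)
  | S k => (2 * (- s) ^ k, 0)
  end.

(* A drone at t covers [t_x - t_y tan a, t_x + t_y tan a];
   FC(X_0,...,X_i) = positions with t_y >= 0 covering all X_0..X_i. *)
Definition in_FC (a s : R) (i : nat) (t : pt) : Prop :=
  0 <= snd t /\
  forall k, (k <= i)%nat ->
    fst t - snd t * tan a <= fst (Xreq s k) <= fst t + snd t * tan a.

Definition Tapex (a s : R) (i : nat) : pt :=
  match i with
  | O => (0, 0)
  | 1%nat => (1, cot a)
  | S (S k) => ((- s) ^ k * (1 - s), s ^ k * (1 + s) * cot a)
  end.

Definition oopt (a s : R) (i : nat) : R := dist (Xreq s 0) (Tapex a s i).

Definition mh_candidate (a s rho : R) (j : nat) (prev p : pt) : Prop :=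
  exists z, 0 <= z /\
    p = (fst (Tapex a s (S j)) + z * (fst (Tapex a s (S (S j))) - fst (Tapex a s (S j))),
         snd (Tapex a s (S j)) + z * (snd (Tapex a s (S (S j))) - snd (Tapex a s (S j)))) /\
    dist prev p = rho * (oopt a s (S j) - oopt a s j).

(* An execution of MaxHedge: Z is the sequence of responses, D the domain
   (set of rounds actually executed). *)
Definition maxhedge_exec (a s rho : R) (Z : nat -> pt) (D : nat -> Prop) : Prop :=
  Z 0%nat = Xreq s 0 /\ D 0%nat /\
  (forall j, D (S j) <-> (D j /\ exists p, mh_candidate a s rho j (Z j) p)) /\
  (forall j, D (S j) -> mh_candidate a s rho j (Z j) (Z (S j))).

Definition mh_valid (a s : R) (Z : nat -> pt) (D : nat -> Prop) : Prop :=
  forall j, (1 <= j)%nat -> D j -> 0 < fst (Z j) * fst (Tapex a s j).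

Fixpoint cost (P : nat -> pt) (i : nat) : R :=
  match i with
  | O => 0
  | S k => cost P k + dist (P k) (P (S k))
  end.

Definition alg' (Z P : nat -> pt) (i : nat) : nat -> pt :=
  fun j => if Nat.ltb j i then Z j else P i.

Definition cautious (Z P : nat -> pt) (j : nat) : Prop :=
  dist (Z (pred j)) (P j) <= dist (Z (pred j)) (Z j).

(* Main.v *)
Require Import Defs.
From Stdlib Require Import Reals Lra Psatz Arith Lia.
Open Scope R_scope.

Lemma sq_le (X Y : R) : 0 <= X -> Y * Y <= X * X -> Y <= X.
Proof. intros. nra. Qed.

Lemma sqrt_facts (e : R) : 0 <= e -> 0 <= sqrt e /\ sqrt e * sqrt e = e.
Proof. intros. split. apply sqrt_pos. apply sqrt_sqrt; auto. Qed.

Lemma cs (x1 x2 y1 y2 : R) :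
  x1*y1 + x2*y2 <= sqrt (x1^2+x2^2) * sqrt (y1^2+y2^2).
Proof.
  destruct (sqrt_facts (x1^2+x2^2)) as [h1 h2]; [apply Rplus_le_le_0_compat; apply pow2_ge_0|].
  destruct (sqrt_facts (y1^2+y2^2)) as [h3 h4]; [apply Rplus_le_le_0_compat; apply pow2_ge_0|].
  apply sq_le. apply Rmult_le_pos; auto.
  replace (sqrt (x1 ^ 2 + x2 ^ 2) * sqrt (y1 ^ 2 + y2 ^ 2) *
   (sqrt (x1 ^ 2 + x2 ^ 2) * sqrt (y1 ^ 2 + y2 ^ 2))) with
   ((sqrt (x1 ^ 2 + x2 ^ 2) * sqrt (x1 ^ 2 + x2 ^ 2)) * (sqrt (y1 ^ 2 + y2 ^ 2) * sqrt (y1 ^ 2 + y2 ^ 2))) by ring.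
  rewrite h2, h4. pose proof (pow2_ge_0 (x1*y2-x2*y1)). nra.
Qed.

Lemma key_id1 c d a m k l :
  (c*l+d*k)^2*(a*a*l+m*m*l+2*a*m*k)-(a*l+m*k)^2*(c*c*l+d*d*l+2*c*d*k)
  = (l*l-k*k)*(c*m-a*d)*(l*(c*m+a*d)+2*k*d*m).
Proof. ring. Qed.
Lemma key_id2 c d a m k l :
  (a*k+m*l)^2*(c*c*l+d*d*l+2*c*d*k)-(c*k+d*l)^2*(a*a*l+m*m*l+2*a*m*k)
  = (l*l-k*k)*(c*m-a*d)*(l*(c*m+a*d)+2*k*c*a).
Proof. ring. Qed.

Lemma core u c d g d' a b a' b' :
 u^2 <= 1 -> 0<c -> 0<=d -> 0<g -> 0<=d' -> d<=c -> d'<=g ->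
 0<=a -> 0<=b -> 0<=a' -> 0<=b' ->
 sqrt(((b-a-c)*u)^2 + (a+b+c)^2) <= sqrt(((d-c)*u)^2 + (d+c)^2) ->
 sqrt(((g+b'-a')*u)^2 + (g+a'+b')^2) <= sqrt(((g-d')*u)^2 + (g+d')^2) ->
 sqrt(((d-c)*u)^2 + (d+c)^2) + sqrt(((g+b'-a')*u)^2 + (g+a'+b')^2)
 <= sqrt(((b-a-c)*u)^2 + (a+b+c)^2) + sqrt(((d+g+b'-a'-b+a)*u)^2 + (d+g+a'+b'-a-b)^2).
Proof.
  intros Hu Hc Hd Hg Hd' Hdc Hdg Ha Hb Ha' Hb' HP HQ.
  pose proof (cs ((b-a-c)*u) (a+b+c) ((d-c)*u) (d+c)) as CS1.
  pose proof (cs ((d+g+b'-a'-b+a)*u) (d+g+a'+b'-a-b) ((g+b'-a')*u) (g+a'+b')) as CS2.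
  set (rP := sqrt(((b-a-c)*u)^2 + (a+b+c)^2)) in *.
  set (r := sqrt(((d-c)*u)^2 + (d+c)^2)) in *.
  set (L := sqrt(((g+b'-a')*u)^2 + (g+a'+b')^2)) in *.
  set (Ln := sqrt(((g-d')*u)^2 + (g+d')^2)) in *.
  set (PQ := sqrt(((d+g+b'-a'-b+a)*u)^2 + (d+g+a'+b'-a-b)^2)) in *.
  destruct (sqrt_facts (((b-a-c)*u)^2 + (a+b+c)^2)) as [rP0 rP2]; [apply Rplus_le_le_0_compat; apply pow2_ge_0|].
  destruct (sqrt_facts (((d-c)*u)^2 + (d+c)^2)) as [r0 r2]; [apply Rplus_le_le_0_compat; apply pow2_ge_0|].
  destruct (sqrt_facts (((g+b'-a')*u)^2 + (g+a'+b')^2)) as [L0 L2]; [apply Rplus_le_le_0_compat; apply pow2_ge_0|].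
  destruct (sqrt_facts (((g-d')*u)^2 + (g+d')^2)) as [Ln0 Ln2]; [apply Rplus_le_le_0_compat; apply pow2_ge_0|].
  destruct (sqrt_facts (((d+g+b'-a'-b+a)*u)^2 + (d+g+a'+b'-a-b)^2)) as [PQ0 PQ2]; [apply Rplus_le_le_0_compat; apply pow2_ge_0|].
  fold rP in rP0, rP2. fold r in r0, r2. fold L in L0, L2. fold Ln in Ln0, Ln2. fold PQ in PQ0, PQ2.
  set (l := 1 + u^2). set (k := 1 - u^2).
  assert (Hk : 0 <= k) by (unfold k; lra).
  assert (Hlk : 0 <= l*l - k*k) by (replace (l*l-k*k) with (4*u^2) by (unfold l,k; ring); pose proof (pow2_ge_0 u); lra).
  assert (E1 : ((b-a-c)*u)^2 + (a+b+c)^2 = l*((a+c)^2 + b^2) + 2*k*(a+c)*b) by (unfold l,k; ring).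
  assert (E2 : ((d-c)*u)^2 + (d+c)^2 = l*(c*c + d*d) + 2*k*c*d) by (unfold l,k; ring).
  assert (E3 : ((g+b'-a')*u)^2 + (g+a'+b')^2 = l*(a'*a' + (g+b')*(g+b')) + 2*k*a'*(g+b')) by (unfold l,k; ring).
  assert (E4 : ((g-d')*u)^2 + (g+d')^2 = l*(d'*d' + g*g) + 2*k*d'*g) by (unfold l,k; ring).
  assert (Hl : 1 <= l) by (unfold l; nra).
  assert (Hbd : b <= d).
  { assert (rP*rP <= r*r) by nra.
    rewrite rP2, r2, E1, E2 in H.
    destruct (Rle_or_lt b d); auto.
    exfalso.
    assert (b*b + (a+c)^2 > c*c+d*d) by nra.
    assert ((a+c)*b > c*d) by nra.
    nra. }
  assert (Had : a' <= d').
  { assert (L*L <= Ln*Ln) by nra.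
    rewrite L2, Ln2, E3, E4 in H.
    destruct (Rle_or_lt a' d'); auto.
    exfalso.
    assert (a'*a' + (g+b')*(g+b') > d'*d'+g*g) by nra.
    assert (a'*(g+b') > d'*g) by nra.
    nra. }
  assert (rpos : 0 < r).
  { destruct r0 as [|H0]; auto. exfalso. rewrite <- H0 in r2. rewrite E2 in r2. assert (0 < l*(c*c)) by (apply Rmult_lt_0_compat; nra). assert (0 <= l*(d*d)) by (apply Rmult_le_pos; nra). assert (0 <= k*c*d) by (apply Rmult_le_pos; [apply Rmult_le_pos|]; lra). nra. }
  assert (Lpos : 0 < L).
  { destruct L0 as [|H0]; auto. exfalso. rewrite <- H0 in L2. rewrite E3 in L2. assert (0 < l*((g+b')*(g+b'))) by (apply Rmult_lt_0_compat; nra). assert (0 <= l*(a'*a')) by (apply Rmult_le_pos; nra). assert (0 <= k*a'*(g+b')) by (apply Rmult_le_pos; [apply Rmult_le_pos|]; lra). nra. }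
  set (m := g + b') in *.
  assert (Hcm : a'*d <= c*m) by (unfold m; nra).
  assert (K1 : r*(a'*l + m*k) <= L*(c*l+d*k)).
  { apply sq_le. apply Rmult_le_pos; [lra| unfold l,k; nra].
    replace (r * (a' * l + m * k) * (r * (a' * l + m * k))) with ((r*r)*(a'*l+m*k)^2) by ring.
    replace (L * (c * l + d * k) * (L * (c * l + d * k))) with ((L*L)*(c*l+d*k)^2) by ring.
    rewrite r2, L2, E2, E3.
    pose proof (key_id1 c d a' m k l) as KI.
    assert (0 <= (l*l-k*k)*(c*m-a'*d)*(l*(c*m+a'*d)+2*k*d*m)).
    { apply Rmult_le_pos. apply Rmult_le_pos; lra. 
      assert (0 <= c*m+a'*d) by (unfold m in *; nra).
      assert (0 <= k*d*m) by (unfold m in *; apply Rmult_le_pos; [apply Rmult_le_pos|]; lra).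
      nra. }
    nra. }
  assert (K2 : L*(d*l+c*k) <= r*(m*l + a'*k)).
  { apply sq_le. apply Rmult_le_pos; [lra| unfold m in *; nra].
    replace (r * (m*l + a'*k) * (r * (m*l + a'*k))) with ((r*r)*(a'*k+m*l)^2) by ring.
    replace (L * (d*l+c*k) * (L * (d*l+c*k))) with ((L*L)*(c*k+d*l)^2) by ring.
    rewrite r2, L2, E2, E3.
    pose proof (key_id2 c d a' m k l) as KI.
    assert (0 <= (l*l-k*k)*(c*m-a'*d)*(l*(c*m+a'*d)+2*k*c*a')).
    { apply Rmult_le_pos. apply Rmult_le_pos; lra. 
      assert (0 <= c*m+a'*d) by (unfold m in *; nra).
      assert (0 <= k*c*a') by (apply Rmult_le_pos; [apply Rmult_le_pos|]; lra).
      nra. }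
    nra. }
  assert (V1W : L*(a*(c*l+d*k) - (d-b)*(d*l+c*k)) >= r*(a*(a'*l+m*k) - (d-b)*(m*l+a'*k))).
  { assert (0 <= d - b) by lra. nra. }
  assert (C1 : rP*r >= r*r + (a*(c*l+d*k) - (d-b)*(d*l+c*k))).
  { rewrite r2, E2. unfold l, k. nra. }
  assert (C2 : PQ*L >= L*L - (a*(a'*l+m*k) - (d-b)*(m*l+a'*k))).
  { rewrite L2, E3. unfold l, k, m in *. nra. }
  assert ((r+L)*(r*L) <= (rP+PQ)*(r*L)) by nra.
  apply Rmult_le_reg_r with (r*L). nra. exact H.
Qed.

Lemma dist_eq x1 y1 x2 y2 dx dy : x2 - x1 = dx -> y2 - y1 = dy ->
  Defs.dist (x1,y1) (x2,y2) = sqrt (dx^2+dy^2).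
Proof. intros <- <-. reflexivity. Qed.

Lemma geo u c d g d' a b a' b' ox oy Zm Zk P Q Zn :
 u^2 <= 1 -> 0<c -> 0<=d -> 0<g -> 0<=d' -> d<=c -> d'<=g ->
 0<=a -> 0<=b -> 0<=a' -> 0<=b' ->
 Zm = (ox + c*u, oy - c) -> Zk = (ox + d*u, oy + d) ->
 P = (ox + (b-a)*u, oy + (a+b)) ->
 Q = (ox + (d+g+b'-a')*u, oy + (d+g+a'+b')) ->
 Zn = (ox + (d+g-d')*u, oy + (d+g+d')) ->
 Defs.dist Zm P <= Defs.dist Zm Zk -> Defs.dist Zk Q <= Defs.dist Zk Zn ->
 Defs.dist Zm Zk + Defs.dist Zk Q <= Defs.dist Zm P + Defs.dist P Q.
Proof.
  intros Hu Hc Hd Hg Hd' Hdc Hdg Ha Hb Ha' Hb' EZm EZk EP EQ EZn H1 H2.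
  assert (e1 : Defs.dist Zm P = sqrt(((b-a-c)*u)^2 + (a+b+c)^2)) by (subst; apply dist_eq; ring).
  assert (e2 : Defs.dist Zm Zk = sqrt(((d-c)*u)^2 + (d+c)^2)) by (subst; apply dist_eq; ring).
  assert (e3 : Defs.dist Zk Q = sqrt(((g+b'-a')*u)^2 + (g+a'+b')^2)) by (subst; apply dist_eq; ring).
  assert (e4 : Defs.dist Zk Zn = sqrt(((g-d')*u)^2 + (g+d')^2)) by (subst; apply dist_eq; ring).
  assert (e5 : Defs.dist P Q = sqrt(((d+g+b'-a'-b+a)*u)^2 + (d+g+a'+b'-a-b)^2)) by (subst; apply dist_eq; ring).
  rewrite e1, e2, e3, e4 in *. rewrite e5.
  apply (core u c d g d' a b a' b'); auto.
Qed.

Definition sg (k : nat) : R := (-1)^k.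
Definition lam (s : R) (k : nat) : R :=
  match k with O => 1 | 1%nat => s | S (S j) => s^j*(s*s-1) end.

Lemma sg_S k : sg (S k) = - sg k.
Proof. unfold sg; simpl; ring. Qed.

Lemma sg_pm k : sg k = 1 \/ sg k = -1.
Proof. induction k. left; reflexivity. rewrite sg_S. destruct IHk as [-> | ->]; [right|left]; ring. Qed.

Lemma negpow s k : (-s)^k = sg k * s^k.
Proof. induction k; unfold sg in *; simpl. ring. rewrite IHk. ring. Qed.

Lemma lam_pos s k : 1 < s -> 0 < lam s k.
Proof.
  intros Hs. destruct k as [|[|j]]; simpl; try lra.
  apply Rmult_lt_0_compat. apply pow_lt; lra. nra.
Qed.

Lemma T_step a s k :
  fst (Tapex a s (S k)) = fst (Tapex a s k) + lam s k * sg k /\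
  snd (Tapex a s (S k)) = snd (Tapex a s k) + lam s k * cot a.
Proof.
  destruct k as [|[|j]]; unfold sg; simpl; split; try ring.
  rewrite !negpow; unfold sg; simpl; ring.
Qed.

Lemma apex_lines a s k : cot a * tan a = 1 -> (1 <= k)%nat ->
  exists j1 j2, (j1 <= k)%nat /\ (j2 <= k)%nat /\
    fst (Tapex a s k) - snd (Tapex a s k) * tan a = fst (Xreq s j1) /\
    fst (Tapex a s k) + snd (Tapex a s k) * tan a = fst (Xreq s j2).
Proof.
  intros Hct Hk. destruct k as [|[|j]]; [lia| |].
  - exists 0%nat, 1%nat. simpl. repeat split; try lia; rewrite Hct; ring.
  - destruct (sg_pm j) as [Hj|Hj].
    + exists (S (S j)), (S j). simpl. repeat split; try lia;
      rewrite ?negpow, Hj; [|]; 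
      replace (s ^ j * (1 + s) * cot a * tan a) with (s^j*(1+s)*(cot a * tan a)) by ring;
      rewrite Hct; ring.
    + exists (S j), (S (S j)). simpl. repeat split; try lia;
      rewrite ?negpow, Hj; [|]; 
      replace (s ^ j * (1 + s) * cot a * tan a) with (s^j*(1+s)*(cot a * tan a)) by ring;
      rewrite Hct; ring.
Qed.

Lemma FC_rep a s k P : 0 < tan a -> cot a * tan a = 1 -> (1 <= k)%nat ->
  in_FC a s k P -> exists A B, 0 <= A /\ 0 <= B /\
   P = (fst (Tapex a s k) + (A - B) * tan a, snd (Tapex a s k) + (A + B)).
Proof.
  intros Ht Hct Hk [Hy HF].
  destruct (apex_lines a s k Hct Hk) as [j1 [j2 [Hj1 [Hj2 [E1 E2]]]]].
  destruct (HF j1 Hj1) as [F1 _]. destruct (HF j2 Hj2) as [_ F2].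
  destruct P as [px py]. simpl in *.
  set (tx := fst (Tapex a s k)) in *. set (ty := snd (Tapex a s k)) in *.
  exists (((px + py * tan a) - (tx + ty * tan a)) / (2 * tan a)).
  exists (((tx - ty * tan a) - (px - py * tan a)) / (2 * tan a)).
  split; [|split].
  - unfold Rdiv; apply Rmult_le_pos; [lra| apply Rlt_le, Rinv_0_lt_compat; lra].
  - unfold Rdiv; apply Rmult_le_pos; [lra| apply Rlt_le, Rinv_0_lt_compat; lra].
  - f_equal; field; lra.
Qed.

Lemma D_down a s rho Z D : maxhedge_exec a s rho Z D ->
  forall n k, D (k + n)%nat -> D k.
Proof.
  intros [_ [_ [HD _]]] n. induction n; intros k Hk.
  - rewrite Nat.add_0_r in Hk; auto.
  - apply IHn. replace (k + S n)%nat with (S (k + n)) in Hk by lia.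
    apply HD in Hk. tauto.
Qed.

Definition Bz (s : R) (k : nat) (z : R) : Prop :=
  match k with O => z = 0 | 1%nat => s * z < 1 | _ => (1 + s) * z < 1 end.

Lemma Z_rep a s rho Z D : 1 < s -> maxhedge_exec a s rho Z D -> mh_valid a s Z D ->
  forall k, D k -> exists z, 0 <= z /\ Bz s k z /\
    Z k = (fst (Tapex a s k) + z * lam s k * sg k, snd (Tapex a s k) + z * lam s k * cot a).
Proof.
  intros Hs Hex Hv k Hk. destruct Hex as [HZ0 [_ [_ HC]]].
  destruct k as [|k].
  - exists 0. split; [lra|split]; [reflexivity|]. rewrite HZ0. simpl. f_equal; ring.
  - destruct (HC k Hk) as [z [Hz [EZ _]]].
    destruct (T_step a s (S k)) as [Tx Ty].
    assert (EZ' : Z (S k) = (fst (Tapex a s (S k)) + z * lam s (S k) * sg (S k),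
                             snd (Tapex a s (S k)) + z * lam s (S k) * cot a)).
    { rewrite EZ. rewrite Tx, Ty. f_equal; ring. }
    exists z. split; [auto|split; [|auto]].
    pose proof (Hv (S k) ltac:(lia) Hk) as V. rewrite EZ' in V. cbn [fst] in V.
    destruct k as [|j].
    + simpl in V. unfold sg in V. simpl. simpl in V. nra.
    + unfold Bz.
      assert (Tx2 : fst (Tapex a s (S (S j))) = sg j * s^j * (1 - s)) by (simpl; rewrite negpow; ring).
      assert (Hl2 : lam s (S (S j)) = s^j * (s*s-1)) by reflexivity.
      assert (Hs2 : sg (S (S j)) = sg j) by (rewrite !sg_S; ring).
      rewrite Tx2, Hl2, Hs2 in V.
      assert (Hsj : 0 < s^j) by (apply pow_lt; lra).
      assert (Hsg : sg j * sg j = 1) by (destruct (sg_pm j) as [-> | ->]; ring).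
      replace ((sg j * s ^ j * (1 - s) + z * (s ^ j * (s * s - 1)) * sg j) * (sg j * s ^ j * (1 - s)))
        with ((sg j * sg j) * (s^j * s^j) * ((1-s)*(1-s)) * (1 - (1+s)*z)) in V by ring.
      rewrite Hsg in V.
      assert (0 < (s^j*s^j) * ((1-s)*(1-s))) by (apply Rmult_lt_0_compat; nra).
      nra.
Qed.

Lemma Bz_lt1 s k z : 1 < s -> 0 <= z -> Bz s k z -> z < 1.
Proof. intros Hs Hz HB. destruct k as [|[|j]]; simpl in HB; nra. Qed.

Lemma Bz_step s k z z' : 1 < s -> 0 <= z -> 0 <= z' -> Bz s k z -> Bz s (S k) z' ->
  z' * lam s (S k) <= (1 - z) * lam s k.
Proof.
  intros Hs Hz Hz' HB HB'. destruct k as [|[|j]]; simpl in HB, HB' |- *.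
  - subst. lra.
  - nra.
  - assert (Hsj : 0 < s^j) by (apply pow_lt; lra).
    replace (z' * (s * s ^ j * (s * s - 1))) with ((z' * s) * (s^j * (s*s-1))) by ring.
    replace ((1 - z) * (s ^ j * (s * s - 1))) with ((1 - z) * (s^j * (s*s-1))) by ring.
    apply Rmult_le_compat_r. apply Rmult_le_pos; nra.
    assert (z' * s * (1+s) <= s) by nra.
    assert ((1 - z) * (1+s) >= s) by nra.
    nra.
Qed.

Lemma cost_ext f g n : (forall j, (j <= n)%nat -> f j = g j) -> cost f n = cost g n.
Proof.
  induction n; intros H; simpl. reflexivity.
  rewrite IHn by (intros; apply H; lia). rewrite (H n), (H (S n)) by lia. reflexivity.
Qed.

Lemma tan_facts a : 0 < a <= PI / 4 -> 0 < tan a /\ tan a <= 1 /\ cot a * tan a = 1 /\ 0 < cot a.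
Proof.
  intros [H1 H2]. pose proof PI_RGT_0.
  assert (Ht : 0 < tan a) by (apply tan_gt_0; lra).
  assert (Ht1 : tan a <= 1) by (rewrite <- tan_PI4; apply tan_incr_1; lra).
  unfold cot. repeat split; auto.
  field; lra. apply Rinv_0_lt_compat; auto.
Qed.

Lemma step_main a s rho Z D P i n (Ha : 0 < a <= PI / 4) (Hs : 1 < s)
  (Hexec : maxhedge_exec a s rho Z D) (Hvalid : mh_valid a s Z D)
  (HiD : D i)
  (HPfc : forall j, (j <= i)%nat -> in_FC a s j (P j))
  (Hcaut : forall j, (1 <= j <= i)%nat -> cautious Z P j) :
  (S (S n) <= i)%nat ->
  Defs.dist (Z n) (Z (S n)) + Defs.dist (Z (S n)) (P (S (S n)))
   <= Defs.dist (Z n) (P (S n)) + Defs.dist (P (S n)) (P (S (S n))).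
Proof.
  intros Hn.
  destruct (tan_facts a Ha) as [Ht [Ht1 [Hct Hcp]]].
  assert (DD : forall k, (k <= i)%nat -> D k).
  { intros k Hk. apply (D_down a s rho Z D Hexec (i - k)). replace (k + (i - k))%nat with i by lia. auto. }
  destruct (Z_rep a s rho Z D Hs Hexec Hvalid n (DD n ltac:(lia))) as [z0 [Hz0 [B0 E0]]].
  destruct (Z_rep a s rho Z D Hs Hexec Hvalid (S n) (DD (S n) ltac:(lia))) as [z1 [Hz1 [B1 E1]]].
  destruct (Z_rep a s rho Z D Hs Hexec Hvalid (S (S n)) (DD (S (S n)) ltac:(lia))) as [z2 [Hz2 [B2 E2]]].
  destruct (FC_rep a s (S n) (P (S n)) Ht Hct ltac:(lia) (HPfc (S n) ltac:(lia))) as [A [B [HA [HB EP]]]].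
  destruct (FC_rep a s (S (S n)) (P (S (S n))) Ht Hct ltac:(lia) (HPfc (S (S n)) ltac:(lia))) as [A' [B' [HA' [HB' EQ]]]].
  pose proof (Hcaut (S n) ltac:(lia)) as C1. pose proof (Hcaut (S (S n)) ltac:(lia)) as C2.
  unfold cautious in C1, C2. simpl pred in C1, C2.
  destruct (T_step a s n) as [Tx0 Ty0]. destruct (T_step a s (S n)) as [Tx1 Ty1].
  rewrite Tx1, Ty1 in E2, EQ. rewrite Tx0, Ty0 in E1, E2, EP, EQ.
  rewrite !sg_S in E1, E2.
  pose proof (lam_pos s n Hs). pose proof (lam_pos s (S n) Hs). pose proof (lam_pos s (S (S n)) Hs).
  pose proof (Bz_lt1 s n z0 Hs Hz0 B0). pose proof (Bz_lt1 s (S n) z1 Hs Hz1 B1).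
  pose proof (Bz_step s n z0 z1 Hs Hz0 Hz1 B0 B1) as Q1.
  pose proof (Bz_step s (S n) z1 z2 Hs Hz1 Hz2 B1 B2) as Q2.
  set (tx := fst (Tapex a s n)) in *. set (ty := snd (Tapex a s n)) in *.
  assert (Hsg : sg n * sg n = 1) by (destruct (sg_pm n) as [-> | ->]; ring).
  assert (Hu : (- sg n * tan a)^2 <= 1).
  { replace ((- sg n * tan a)^2) with ((sg n * sg n) * (tan a * tan a)) by ring. rewrite Hsg. nra. }
  assert (Hcc : 0 < cot a) by auto.
  unfold cot in *.
  destruct (sg_pm n) as [Hs1|Hs1].
  -
    apply (geo (- sg n * tan a) ((1-z0)*lam s n*/tan a) (z1*lam s (S n)*/tan a)
               ((1-z1)*lam s (S n)*/tan a) (z2*lam s (S (S n))*/tan a) A B A' B'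
               (tx + lam s n * sg n) (ty + lam s n * / tan a) (Z n) (Z (S n)) (P (S n)) (P (S (S n))) (Z (S (S n)))); auto.
    all: try (apply Rmult_lt_0_compat; [apply Rmult_lt_0_compat|]; nra).
    all: try (apply Rmult_le_pos; [apply Rmult_le_pos|]; nra).
    all: try (apply Rmult_le_compat_r; [nra|]; nra).
    all: try (rewrite ?E0, ?E1, ?E2, ?EP, ?EQ; rewrite ?sg_S, ?sg_S, Hs1; f_equal; field; lra).
  - apply (geo (- sg n * tan a) ((1-z0)*lam s n*/tan a) (z1*lam s (S n)*/tan a)
               ((1-z1)*lam s (S n)*/tan a) (z2*lam s (S (S n))*/tan a) B A B' A'
               (tx + lam s n * sg n) (ty + lam s n * / tan a) (Z n) (Z (S n)) (P (S n)) (P (S (S n))) (Z (S (S n)))); auto.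
    all: try (apply Rmult_lt_0_compat; [apply Rmult_lt_0_compat|]; nra).
    all: try (apply Rmult_le_pos; [apply Rmult_le_pos|]; nra).
    all: try (apply Rmult_le_compat_r; [nra|]; nra).
    all: try (rewrite ?E0, ?E1, ?E2, ?EP, ?EQ; rewrite ?sg_S, ?sg_S, Hs1; f_equal; field; lra).
Qed.

Theorem lemma13 (a s rho : R) (Ha : 0 < a <= PI / 4) (Hs : 1 < s) (Hrho : 0 < rho)
  (Z : nat -> pt) (D : nat -> Prop)
  (Hexec : maxhedge_exec a s rho Z D) (Hvalid : mh_valid a s Z D)
  (P : nat -> pt) (i : nat) (HiD : D i)
  (HP0 : P 0%nat = Xreq s 0)
  (HPfc : forall j, (j <= i)%nat -> in_FC a s j (P j))
  (Hcaut : forall j, (1 <= j <= i)%nat -> cautious Z P j) :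
  cost (alg' Z P i) i <= cost P i.
Proof.
  assert (claim : forall n, (S n <= i)%nat ->
            cost Z n + Defs.dist (Z n) (P (S n)) <= cost P (S n)).
  { induction n; intros Hn.
    - simpl. destruct Hexec as [HZ0 _]. rewrite HZ0, <- HP0. lra.
    - pose proof (IHn ltac:(lia)) as IH.
      pose proof (step_main a s rho Z D P i n Ha Hs Hexec Hvalid HiD HPfc Hcaut Hn) as St.
      change (cost P (S (S n))) with (cost P (S n) + Defs.dist (P (S n)) (P (S (S n)))).
      change (cost Z (S n)) with (cost Z n + Defs.dist (Z n) (Z (S n))).
      lra. }
  destruct i as [|n].
  - simpl. lra.
  - change (cost (alg' Z P (S n)) (S n)) with
      (cost (alg' Z P (S n)) n + Defs.dist (alg' Z P (S n) n) (alg' Z P (S n) (S n))).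
    rewrite (cost_ext (alg' Z P (S n)) Z n).
    + assert (E1 : alg' Z P (S n) n = Z n).
      { unfold alg'. replace (Nat.ltb n (S n)) with true; auto. symmetry. apply Nat.ltb_lt. lia. }
      assert (E2 : alg' Z P (S n) (S n) = P (S n)).
      { unfold alg'. rewrite Nat.ltb_irrefl. reflexivity. }
      rewrite E1, E2. apply claim. lia.
    + intros j Hj. unfold alg'. replace (Nat.ltb j (S n)) with true; auto.
      symmetry. apply Nat.ltb_lt. lia.
Qed.
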